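(* Let $f(x)=x^TAx+a^Tx+\alpha$ with $A$ real symmetric, and $g_i(x)=x^TB_ix+b_i^Tx+\beta_i$, $i=1,\dots,m$, with each $B_i$ real symmetric positive semidefinite. Consider $(QP)$: $\inf\{f(x): g_i(x)\le0,\ i=1,\dots,m\}$. Suppose there exist $i_0$ and $\lambda\in\mathbb{R}$ with $B_{i_0}\succ0$ such that (H1) and (H2) hold, and there exists $x^0$ with $g_i(x^0)<0$ for all $i$. Let $\bar x$ be feasible for $(QP)$. Then $\bar x$ is a global minimizer of $(QP)$ if and only if there exists $\lambda=(\lambda_1,\dots,\lambda_m)\in\mathbb{R}^m_+$ such that (i) $2\big(A+\sum_{i=1}^m\lambda_iB_i\big)\bar x+\big(a+\sum_{i=1}^m\lambda_ib_i\big)=0$; (ii) $\lambda_ig_i(\bar x)=0$ for $i=1,\dots,m$; (iii) $A+\sum_{i=1}^m\lambda_iB_i\succeq 0$.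
   Context: (H1): $A+\lambda B_{i_0}\succeq 0$. (H2): there is a nonzero $v\in\mathbb{R}^n$ with $(A+\lambda B_{i_0})v=0$, $(a+\lambda b_{i_0})^Tv\le0$, $B_iv=0$ and $b_i^Tv\le0$ for all $i\ne i_0$. (The $\lambda$ in (H1),(H2) is a real scalar unrelated to the multiplier vector in the conclusion.) *)

(* Defs.v *)
From mathcomp Require Import all_boot all_order all_algebra.
From mathcomp Require Import reals.
Set Implicit Arguments. Unset Strict Implicit. Unset Printing Implicit Defensive.
Import Order.TTheory GRing.Theory Num.Theory.
Local Open Scope ring_scope.

Definition sc (R : ringType) (M : 'M[R]_1) : R := M 0 0.

Definition quadf (R : ringType) (n : nat) (Q : 'M[R]_n) (q : 'cV[R]_n) (c : R)
  (x : 'cV[R]_n) : R :=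
  sc (x^T *m Q *m x) + sc (q^T *m x) + c.

Definition symmx (R : ringType) (n : nat) (M : 'M[R]_n) : Prop := M^T = M.

(* positive semidefinite (symmetric assumed separately) *)
Definition psd (R : numDomainType) (n : nat) (M : 'M[R]_n) : Prop :=
  forall v : 'cV[R]_n, 0 <= sc (v^T *m M *m v).

Definition pd (R : numDomainType) (n : nat) (M : 'M[R]_n) : Prop :=
  forall v : 'cV[R]_n, v != 0 -> 0 < sc (v^T *m M *m v).

(* Main.v *)
Require Import Defs.
From mathcomp Require Import all_boot all_order all_algebra.
From mathcomp Require Import reals.
From mathcomp Require Import ring lra.
From Stdlib Require Classical.
Import Order.TTheory GRing.Theory Num.Theory.
Local Open Scope ring_scope.
Set Implicit Arguments. Unset Strict Implicit.

Section Dot.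
Variable F : realFieldType.
Variable n : nat.
Implicit Types u v w : 'cV[F]_n.

Definition dot u v : F := sc (u^T *m v).

Lemma dotDl u w v : dot (u + w) v = dot u v + dot w v.
Proof. by rewrite /dot /sc linearD /= mulmxDl mxE. Qed.
Lemma dotDr u w v : dot v (u + w) = dot v u + dot v w.
Proof. by rewrite /dot /sc mulmxDr mxE. Qed.
Lemma dotZl k u v : dot (k *: u) v = k * dot u v.
Proof. by rewrite /dot /sc linearZ /= -scalemxAl mxE. Qed.
Lemma dotZr k u v : dot v (k *: u) = k * dot v u.
Proof. by rewrite /dot /sc -scalemxAr mxE. Qed.
Lemma dot0l v : dot 0 v = 0.
Proof. by rewrite /dot /sc linear0 mul0mx mxE. Qed.
Lemma dot0r v : dot v 0 = 0.
Proof. by rewrite /dot /sc mulmx0 mxE. Qed.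
Lemma dotNl u v : dot (- u) v = - dot u v.
Proof. by rewrite -scaleN1r dotZl mulN1r. Qed.
Lemma dotNr u v : dot v (- u) = - dot v u.
Proof. by rewrite -scaleN1r dotZr mulN1r. Qed.
Lemma dotBl u w v : dot (u - w) v = dot u v - dot w v.
Proof. by rewrite dotDl dotNl. Qed.
Lemma dotBr u w v : dot v (u - w) = dot v u - dot v w.
Proof. by rewrite dotDr dotNr. Qed.
Lemma dotC u v : dot u v = dot v u.
Proof.
rewrite /dot /sc.
have -> : (u^T *m v) 0 0 = ((u^T *m v)^T) 0 0 by rewrite [RHS]mxE.
by rewrite trmx_mul trmxK.
Qed.
Lemma dot_mul u (Q : 'M[F]_n) v : dot u (Q *m v) = dot (Q^T *m u) v.
Proof. by rewrite /dot trmx_mul trmxK mulmxA. Qed.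
Lemma dot_suml I (r : seq I) (P : pred I) (G : I -> 'cV[F]_n) v :
  dot (\sum_(i <- r | P i) G i) v = \sum_(i <- r | P i) dot (G i) v.
Proof. exact: (big_morph (dot^~ v) (fun x y => dotDl x y v) (dot0l v)). Qed.
Lemma dot_sumr I (r : seq I) (P : pred I) (G : I -> 'cV[F]_n) v :
  dot v (\sum_(i <- r | P i) G i) = \sum_(i <- r | P i) dot v (G i).
Proof. exact: (big_morph (dot v) (fun x y => dotDr x y v) (dot0r v)). Qed.
Lemma dot_self_ge0 v : 0 <= dot v v.
Proof.
rewrite /dot /sc mxE; apply: sumr_ge0 => k _; rewrite mxE; exact: sqr_ge0.
Qed.
Lemma dot_self_eq0 v : dot v v <= 0 -> v = 0.
Proof.
move=> h. have h0 : dot v v = 0 by apply/eqP; rewrite eq_le h dot_self_ge0.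
move: h0; rewrite /dot /sc mxE => /eqP; rewrite psumr_eq0; last first.
  by move=> k _; rewrite mxE; exact: sqr_ge0.
move/allP=> hk; apply/matrixP=> i j; rewrite (ord1 j) !mxE.
have := hk i (mem_index_enum i); rewrite mxE /= mulf_eq0 orbb => /eqP ->.
by [].
Qed.
End Dot.

Section Quad.
Variable F : realFieldType.
Variable n : nat.
Implicit Types u v w x d : 'cV[F]_n.

Definition grad (Q : 'M[F]_n) q x := 2%:R *: (Q *m x) + q.

Lemma quadE Q q c x : quadf Q q c x = dot x (Q *m x) + dot q x + c.
Proof. by rewrite /quadf /dot mulmxA. Qed.

Lemma psdE (Q : 'M[F]_n) : psd Q <-> forall v, 0 <= dot v (Q *m v).
Proof. by split=> h v; have := h v; rewrite /dot mulmxA. Qed.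

Lemma quad_shift Q q c x d t : symmx Q ->
  quadf Q q c (x + t *: d) =
  quadf Q q c x + t * dot (grad Q q x) d + t ^+ 2 * dot d (Q *m d).
Proof.
move=> hQ.
have e : dot x (Q *m d) = dot (Q *m x) d by rewrite dot_mul hQ.
have e2 : dot d (Q *m x) = dot (Q *m x) d by rewrite dotC.
rewrite !quadE /grad mulmxDr -scalemxAr !dotDl !dotDr !dotZl !dotZr e e2.
ring.
Qed.
End Quad.

Lemma sum_recr_lift (V : zmodType) m (G : 'I_m.+1 -> V) :
  \sum_(i < m.+1) G i = \sum_(j < m) G (lift ord_max j) + G ord_max.
Proof.
rewrite big_ord_recr; congr (_ + _); apply: eq_bigr => j _; congr G.
by apply: val_inj; rewrite /= /bump leqNgt ltn_ord.
Qed.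

Lemma farkas (F : realFieldType) (n : nat) m : forall (a : 'I_m -> 'cV[F]_n) r,
  (forall d, (forall i, dot (a i) d <= 0) -> dot r d <= 0) ->
  exists mu : 'I_m -> F, (forall i, 0 <= mu i) /\ r = \sum_i mu i *: a i.
Proof.
elim: m => [|m IH] a r H.
  exists (fun _ => 0); split=> //; rewrite big_ord0.
  apply: dot_self_eq0; apply: H => -[k hk] //.
have [P|nP] := Classical_Prop.classic
  (forall d, (forall j, dot (a (lift ord_max j)) d <= 0) -> dot r d <= 0).
  have [mu [mu0 ->]] := IH _ _ P.
  exists (fun i => oapp mu 0 (unlift ord_max i)); split.
    by move=> i; case: (unliftP ord_max i) => [j _|_] /=.
  rewrite sum_recr_lift unlift_none scale0r addr0.
  by apply: eq_bigr => j _; rewrite liftK.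
have [d hd] := Classical_Pred_Type.not_all_ex_not _ _ nP.
have [Hd Hrd] := Classical_Prop.imply_to_and _ _ hd.
have rd : 0 < dot r d by rewrite ltNge; apply/negP.
set s := dot (a ord_max) d.
have s0 : 0 < s.
  rewrite ltNge; apply/negP => hs; apply: Hrd; apply: H => i.
  by case: (unliftP ord_max i) => [j ->|->]; [apply: Hd|].
have sne : s != 0 by rewrite gt_eqF.
pose a' j := a (lift ord_max j) - (dot (a (lift ord_max j)) d / s) *: a ord_max.
pose r' := r - (dot r d / s) *: a ord_max.
have P' : forall d', (forall j, dot (a' j) d' <= 0) -> dot r' d' <= 0.
  move=> d' Hd'.
  pose d'' := d' - (dot (a ord_max) d' / s) *: d.
  have key u : dot u d'' = dot u d' - (dot (a ord_max) d' / s) * dot u d.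
    by rewrite /d'' dotBr dotZr.
  have := H d''; rewrite key /r' dotBl dotZl.
  have -> : dot r d' - dot (a ord_max) d' / s * dot r d =
     dot r d' - dot r d / s * dot (a ord_max) d' by ring.
  apply=> i; rewrite key; case: (unliftP ord_max i) => [j ->|->].
    have := Hd' j; rewrite /a' dotBl dotZl.
    have -> : dot (a (lift ord_max j)) d' - dot (a ord_max) d' / s *
        dot (a (lift ord_max j)) d = dot (a (lift ord_max j)) d' -
        dot (a (lift ord_max j)) d / s * dot (a ord_max) d' by ring.
    by [].
  rewrite -/s mulfVK //; lra.
have [lam [lam0 hr']] := IH _ _ P'.
pose c := (dot r d - \sum_j lam j * dot (a (lift ord_max j)) d) / s.
exists (fun i => oapp lam c (unlift ord_max i)); split.
  move=> i; case: (unliftP ord_max i) => [j _|_] //=.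
  apply: divr_ge0; last exact: ltW.
  rewrite subr_ge0; apply: le_trans (ltW rd); apply: sumr_le0 => j _.
  by apply: mulr_ge0_le0 => //; apply: Hd.
rewrite sum_recr_lift unlift_none /=.
under eq_bigr => j _ do rewrite liftK /=.
have -> : r = r' + (dot r d / s) *: a ord_max by rewrite /r' subrK.
rewrite hr' /a'.
rewrite (eq_bigr (fun j : 'I_m => lam j *: a (lift ord_max j) -
   (lam j * (dot (a (lift ord_max j)) d / s)) *: a ord_max)); last first.
  by move=> j _; rewrite scalerBr scalerA.
rewrite sumrB -scaler_suml -addrA; congr (_ + _).
rewrite -scaleNr -scalerDl; congr (_ *: _).
rewrite /c mulrBl addrC mulr_suml; congr (_ - _).
by apply: eq_bigr => j _; rewrite mulrA.
Qed.

Lemma small1 (F : realFieldType) (al be ga : F) :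
  al < 0 \/ (al = 0 /\ be < 0) ->
  exists2 T, 0 < T & forall t, 0 < t -> t <= T -> al + t * be + t ^+ 2 * ga < 0.
Proof.
have nb := ler_norm be; have ng := ler_norm ga.
have nb0 : 0 <= `|be| by []. have ng0 : 0 <= `|ga| by [].
case=> [al0|[-> be0]].
  have K0 : 0 < `|be| + `|ga| + 1 by lra.
  exists (Num.min 1 (- al / (`|be| + `|ga| + 1))).
    by rewrite lt_min ltr01 /=; apply: divr_gt0 => //; lra.
  move=> t t0; rewrite le_min => /andP[t1]; rewrite ler_pdivlMr // => tK.
  have h1 : t * be <= t * `|be| by apply: ler_wpM2l => //; exact: ltW.
  have h2 : t ^+ 2 * ga <= t ^+ 2 * `|ga| by rewrite ler_wpM2l ?sqr_ge0.
  have h3 : t ^+ 2 * `|ga| <= t * `|ga|.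
    apply: ler_wpM2r => //; rewrite expr2.
    have : t * t <= t * 1 by apply: ler_wpM2l => //; exact: ltW.
    by rewrite mulr1.
  have h4 : t * `|be| + t * `|ga| + t <= - al by move: tK; rewrite !mulrDr mulr1.
  lra.
have K0 : 0 < `|ga| + 1 by lra.
exists (- be / (`|ga| + 1)); first by apply: divr_gt0 => //; lra.
move=> t t0; rewrite ler_pdivlMr // => tK.
have h1 : t * ga <= t * `|ga| by apply: ler_wpM2l => //; exact: ltW.
have h4 : t * `|ga| + t <= - be by move: tK; rewrite !mulrDr mulr1.
have h : be + t * ga < 0 by lra.
have -> : 0 + t * be + t ^+ 2 * ga = t * (be + t * ga) by ring.
by rewrite pmulr_rlt0.
Qed.

Lemma smallseq (F : realFieldType) (I : eqType) (s : seq I) (al be ga : I -> F) :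
  (forall k, k \in s -> al k < 0 \/ (al k = 0 /\ be k < 0)) ->
  exists2 T, 0 < T & forall t, 0 < t -> t <= T ->
    forall k, k \in s -> al k + t * be k + t ^+ 2 * ga k < 0.
Proof.
elim: s => [|k s IH] H; first by exists 1 => //.
have [T1 T10 hT1] := small1 (ga k) (H k (mem_head _ _)).
have [T2 T20 hT2] := IH (fun j js => H j (mem_behead (s:=k :: s) js)).
exists (Num.min T1 T2); first by rewrite lt_min T10 T20.
move=> t t0; rewrite le_min => /andP[tT1 tT2] j; rewrite inE => /orP[/eqP ->|js].
  exact: hT1.
exact: hT2.
Qed.

Lemma convex_kkt (F : realFieldType) n m (H : 'M[F]_n) hq hc
  (B : 'I_m -> 'M[F]_n) b beta (xbar x0 : 'cV[F]_n) :
  symmx H -> psd H -> (forall i, symmx (B i)) -> (forall i, psd (B i)) ->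
  (forall i, quadf (B i) (b i) (beta i) x0 < 0) ->
  (forall i, quadf (B i) (b i) (beta i) xbar <= 0) ->
  (forall x, (forall i, quadf (B i) (b i) (beta i) x <= 0) ->
     quadf H hq hc xbar <= quadf H hq hc x) ->
  exists mu : 'I_m -> F, (forall i, 0 <= mu i) /\
    grad H hq xbar + \sum_i mu i *: grad (B i) (b i) xbar = 0 /\
    (forall i, mu i * quadf (B i) (b i) (beta i) xbar = 0).
Proof.
move=> hHs hHp hBs hBp hx0 hfeas hmin.
pose g i x := quadf (B i) (b i) (beta i) x.
pose act i := g i xbar == 0.
pose q' i := if act i then grad (B i) (b i) xbar else 0.
pose p := grad H hq xbar.
have cone : forall d, (forall i, dot (q' i) d <= 0) -> dot (- p) d <= 0.
  move=> d hd; rewrite dotNl oppr_le0 leNgt; apply/negP => pd0.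
  pose e := x0 - xbar.
  have xe : xbar + 1 *: e = x0 by rewrite scale1r /e addrC subrK.
  have conv i : act i -> dot (grad (B i) (b i) xbar) e < 0.
    move=> /eqP ai; have := hx0 i; rewrite -xe quad_shift // -/(g i xbar) ai.
    have := (psdE (B i)).1 (hBp i) e; lra.
  pose w := dot p e.
  have nw : 0 < `|w| + 1 by have := normr_ge0 w; lra.
  pose eps := - dot p d / (`|w| + 1).
  have eps0 : 0 < eps by apply: divr_gt0 => //; lra.
  have epsw : eps * (`|w| + 1) = - dot p d by rewrite /eps divfK // gt_eqF.
  pose d' := d + eps *: e.
  have hp : dot p d' < 0.
    rewrite /d' dotDr dotZr -/w.
    have : eps * w <= eps * `|w| by apply: ler_wpM2l; [exact: ltW|exact: ler_norm].
    move: epsw; rewrite mulrDr mulr1; lra.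
  have hq' i : act i -> dot (grad (B i) (b i) xbar) d' < 0.
    move=> ai; rewrite /d' dotDr dotZr.
    have := hd i; rewrite /q' ai => h1.
    have h2 : eps * dot (grad (B i) (b i) xbar) e < 0 by rewrite pmulr_rlt0 // conv.
    lra.
  pose al (k : option 'I_m) := if k is Some i then g i xbar else 0.
  pose be (k : option 'I_m) :=
    if k is Some i then dot (grad (B i) (b i) xbar) d' else dot p d'.
  pose ga (k : option 'I_m) :=
    if k is Some i then dot d' (B i *m d') else dot d' (H *m d').
  have hyp : forall k, k \in enum {: option 'I_m} ->
      al k < 0 \/ (al k = 0 /\ be k < 0).
    move=> k _; case: k => [i|]; last by right; split.
    rewrite /al /be; case ai: (act i).
      by right; split; [apply/eqP; exact: ai|apply: hq'].
    by left; rewrite lt_neqAle hfeas andbT; apply/negbT.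
  have [T T0 hT] := @smallseq _ _ (enum {: option 'I_m}) al be ga hyp.
  have := hmin (xbar + T *: d').
  rewrite quad_shift //.
  have := hT T T0 (lexx T) None (mem_enum _ _); rewrite /al /be /ga -/p.
  move=> hlt himp.
  have : quadf H hq hc xbar <= quadf H hq hc xbar + T * dot p d' +
    T ^+ 2 * dot d' (H *m d').
    apply: himp => i; rewrite quad_shift //; apply: ltW.
    have := hT T T0 (lexx T) (Some i) (mem_enum _ _); rewrite /al /be /ga.
    by [].
  lra.
have [mu [mu0 hmu]] := farkas cone.
exists (fun i => if act i then mu i else 0); split.
  by move=> i; case: (act i).
split.
  have -> : \sum_i (if act i then mu i else 0) *: grad (B i) (b i) xbar =
            \sum_i mu i *: q' i.
    by apply: eq_bigr => i _; rewrite /q'; case: (act i); rewrite ?scale0r ?scaler0.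
  by rewrite -hmu -/p subrr.
move=> i; case ai: (act i); last by rewrite mul0r.
by rewrite /act /g in ai; rewrite (eqP ai) mulr0.
Qed.

Section Lin.
Variables (F : realFieldType) (n m : nat).

Lemma gradsum (A : 'M[F]_n) a (B : 'I_m -> 'M[F]_n) b (mu : 'I_m -> F) x :
  grad (A + \sum_i mu i *: B i) (a + \sum_i mu i *: b i) x =
  grad A a x + \sum_i mu i *: grad (B i) (b i) x.
Proof.
have e : \sum_i mu i *: grad (B i) (b i) x =
    2%:R *: \sum_i (mu i *: B i *m x) + \sum_i mu i *: b i.
  rewrite scaler_sumr -big_split; apply: eq_bigr => i _.
  by rewrite /grad scalerDr -scalemxAl !scalerA mulrC.
by rewrite e /grad mulmxDl mulmx_suml scalerDr addrACA.
Qed.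

Lemma quadsum (A : 'M[F]_n) (B : 'I_m -> 'M[F]_n) (mu : 'I_m -> F) d :
  dot d ((A + \sum_i mu i *: B i) *m d) =
  dot d (A *m d) + \sum_i mu i * dot d (B i *m d).
Proof.
rewrite mulmxDl mulmx_suml dotDr dot_sumr; congr (_ + _).
by apply: eq_bigr => i _; rewrite -scalemxAl dotZr.
Qed.

Lemma sum_shift (V : lmodType F) (G : 'I_m -> V) (mu : 'I_m -> F) i0 k :
  \sum_i (mu i + (if i == i0 then k else 0)) *: G i =
  \sum_i mu i *: G i + k *: G i0.
Proof.
rewrite (eq_bigr (fun i => mu i *: G i + (if i == i0 then k else 0) *: G i));
  last by move=> i _; rewrite scalerDl.
rewrite big_split /=; congr (_ + _).
rewrite (bigD1 i0) //= eqxx big1 ?addr0 // => i /negbTE ->; exact: scale0r.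
Qed.

Lemma quad_lin (A Bm : 'M[F]_n) a b al be k x :
  quadf (A + k *: Bm) (a + k *: b) (al + k * be) x =
  quadf A a al x + k * quadf Bm b be x.
Proof.
rewrite !quadE mulmxDl -scalemxAl dotDr dotZr dotDl dotZl; ring.
Qed.
End Lin.
Unset Implicit Arguments.

Theorem proposition5p2 (R : realType) (n m : nat)
  (A : 'M[R]_n) (a : 'cV[R]_n) (alpha : R)
  (B : 'I_m -> 'M[R]_n) (b : 'I_m -> 'cV[R]_n) (beta : 'I_m -> R)
  (hA : symmx A)
  (hBs : forall i, symmx (B i))
  (hBpsd : forall i, psd (B i))
  (i0 : 'I_m) (lam : R)
  (hB0 : pd (B i0))
  (H1 : psd (A + lam *: B i0))
  (H2 : exists2 v : 'cV[R]_n, v != 0 &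
          [/\ (A + lam *: B i0) *m v = 0,
              sc ((a + lam *: b i0)^T *m v) <= 0 &
              forall i, i != i0 -> B i *m v = 0 /\ sc ((b i)^T *m v) <= 0])
  (slater : exists x0 : 'cV[R]_n, forall i, quadf (B i) (b i) (beta i) x0 < 0)
  (xbar : 'cV[R]_n)
  (hfeas : forall i, quadf (B i) (b i) (beta i) xbar <= 0) :
  (forall x : 'cV[R]_n, (forall i, quadf (B i) (b i) (beta i) x <= 0) ->
     quadf A a alpha xbar <= quadf A a alpha x)
  <->
  (exists mu : 'I_m -> R,
     (forall i, 0 <= mu i) /\
     [/\ 2%:R *: ((A + \sum_i mu i *: B i) *m xbar) + (a + \sum_i mu i *: b i) = 0,
         (forall i, mu i * quadf (B i) (b i) (beta i) xbar = 0) &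
         psd (A + \sum_i mu i *: B i)]).
Proof.
split; last first.
  move=> [mu [mu0 [hg hc hp]]] x hx.
  pose d := x - xbar.
  have xd : x = xbar + 1 *: d by rewrite scale1r /d addrC subrK.
  have hgx : \sum_i mu i * quadf (B i) (b i) (beta i) x <= 0.
    by apply: sumr_le0 => i _; apply: mulr_ge0_le0.
  have hsum : \sum_i mu i * quadf (B i) (b i) (beta i) x =
     \sum_i mu i * dot (grad (B i) (b i) xbar) d +
     \sum_i mu i * dot d (B i *m d).
    rewrite -big_split; apply: eq_bigr => i _ /=.
    rewrite xd quad_shift // mulrDr mulrDr hc; ring.
  have hgr : dot (grad A a xbar) d + \sum_i mu i * dot (grad (B i) (b i) xbar) d = 0.
    have hg' : grad A a xbar + \sum_i mu i *: grad (B i) (b i) xbar = 0.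
      by rewrite -gradsum.
    have := congr1 (fun w => dot w d) hg'; rewrite /= dotDl dot_suml dot0l.
    move=> h; apply: etrans h; congr (_ + _); apply: eq_bigr => i _; by rewrite dotZl.
  have hq : 0 <= dot d (A *m d) + \sum_i mu i * dot d (B i *m d).
    by rewrite -quadsum; apply: (psdE _).1.
  have hfx : quadf A a alpha x = quadf A a alpha xbar + dot (grad A a xbar) d
     + dot d (A *m d).
    by rewrite {1}xd quad_shift // mul1r expr1n mul1r.
  lra.
move=> hmin.
have [v vnz [hv1 hv2 hv3]] := H2.
have [x0 hx0] := slater.
pose k := if 0 < lam then lam else 0.
have k0 : 0 <= k by rewrite /k; case: ifP => // /ltW.
pose Hm := A + k *: B i0.
pose hq := a + k *: b i0.
pose hc := alpha + k * beta i0.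
have hHs : symmx Hm by rewrite /symmx /Hm linearD linearZ /= hA hBs.
have hBq := fun i => (psdE (B i)).1 (hBpsd i).
have hHp : psd Hm.
  apply/psdE => w; rewrite /Hm /k; case: ifP => lp; first exact: (psdE _).1 H1 w.
  have := (psdE _).1 H1 w; have := hBq i0 w.
  rewrite !mulmxDl -!scalemxAl !dotDr !dotZr; nra.
have hsplit x : quadf Hm hq hc x = quadf A a alpha x + k * quadf (B i0) (b i0) (beta i0) x.
  exact: quad_lin.
have [kg hminH] : k * quadf (B i0) (b i0) (beta i0) xbar = 0 /\
   (forall x, (forall i, quadf (B i) (b i) (beta i) x <= 0) ->
     quadf Hm hq hc xbar <= quadf Hm hq hc x).
  case lp : (0 < lam); last first.
    split; first by rewrite /k lp mul0r.
    by move=> x hx; rewrite !hsplit /k lp !mul0r !addr0; apply: hmin.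
  have kl : k = lam by rewrite /k lp.
  have hHv : Hm *m v = 0 by rewrite /Hm kl.
  have hqv : dot hq v <= 0 by rewrite /hq kl.
  have gam0 : 0 < dot v (B i0 *m v) by have := hB0 v vnz; rewrite /dot mulmxA.
  have push : forall x, (forall i, quadf (B i) (b i) (beta i) x <= 0) ->
      exists2 y, (forall i, quadf (B i) (b i) (beta i) y <= 0) &
        quadf A a alpha y <= quadf Hm hq hc x.
    move=> x hx.
    set gam := dot v (B i0 *m v).
    set be := dot (grad (B i0) (b i0) x) v.
    set g0 := quadf (B i0) (b i0) (beta i0) x.
    have g0le : g0 <= 0 := hx i0.
    set D := be ^+ 2 - 4%:R * gam * g0.
    have D0 : 0 <= D.
      have := sqr_ge0 be; have : 0 <= gam * (- g0) by apply: mulr_ge0; [exact: ltW | rewrite oppr_ge0].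
      rewrite /D; lra.
    set s := Num.sqrt D.
    have s0 : 0 <= s := sqrtr_ge0 D.
    have s2 : s ^+ 2 = D := sqr_sqrtr D0.
    have sbe : be <= s.
      rewrite leNgt; apply/negP => h.
      have : 0 < (be - s) * (be + s) by apply: mulr_gt0; lra.
      have : 0 <= gam * (- g0) by apply: mulr_ge0; [exact: ltW | rewrite oppr_ge0].
      move: s2; rewrite /D; nra.
    have gne : 2%:R * gam != 0 by rewrite gt_eqF // mulr_gt0.
    set t := (s - be) / (2%:R * gam).
    have t0 : 0 <= t by apply: divr_ge0; [rewrite subr_ge0 | apply: ltW; rewrite mulr_gt0].

    have ht : t * (2%:R * gam) = s - be by rewrite /t divfK.
    have g0y : quadf (B i0) (b i0) (beta i0) (x + t *: v) = 0.
      rewrite quad_shift // -/g0 -/be -/gam.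
      have e : 4%:R * gam * (g0 + t * be + t ^+ 2 * gam) =
        4%:R * gam * g0 + 2%:R * be * (t * (2%:R * gam)) + (t * (2%:R * gam)) ^+ 2.
        by ring.
      have e2 : 4%:R * gam * g0 + 2%:R * be * (s - be) + (s - be) ^+ 2 = s ^+ 2 - D.
        by rewrite /D; ring.
      rewrite ht e2 s2 subrr in e.
      move/eqP: e; rewrite mulf_eq0 => /orP[|/eqP //].
      by rewrite gt_eqF // mulr_gt0.
    exists (x + t *: v).
      move=> i; case: (eqVneq i i0) => [->|ne]; first by rewrite g0y.
      have [hBv hbv] := hv3 i ne.
      rewrite quad_shift // hBv dot0r mulr0 addr0.
      have -> : dot (grad (B i) (b i) x) v = dot (b i) v.
        rewrite /grad dotDl dotZl dotC dot_mul hBs hBv dot0l mulr0 add0r //.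
      have : t * dot (b i) v <= 0 by apply: mulr_ge0_le0.
      have := hx i; lra.
    have := hsplit (x + t *: v); rewrite g0y mulr0 addr0 => <-.
    rewrite quad_shift // hHv dot0r mulr0 addr0.
    have -> : dot (grad Hm hq x) v = dot hq v.
      rewrite /grad dotDl dotZl dotC dot_mul hHs hHv dot0l mulr0 add0r //.
    have : t * dot hq v <= 0 by apply: mulr_ge0_le0.
    lra.
  have kgle : k * quadf (B i0) (b i0) (beta i0) xbar <= 0.
    exact: mulr_ge0_le0.
  have [y hy hfy] := push xbar hfeas.
  have := hmin y hy; rewrite hsplit in hfy.
  move=> hxy.
  have kg : k * quadf (B i0) (b i0) (beta i0) xbar = 0 by lra.
  split=> // x hx.
  have [z hz hfz] := push x hx.
  have := hmin z hz; rewrite hsplit kg; lra.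
have [mu [mu0 [hg hc0]]] := convex_kkt hHs hHp hBs hBpsd hx0 hfeas hminH.
exists (fun i => mu i + (if i == i0 then k else 0)); split.
  by move=> i; apply: addr_ge0 => //; case: ifP.
have eA : A + \sum_i (mu i + (if i == i0 then k else 0)) *: B i =
    Hm + \sum_i mu i *: B i.
  by rewrite sum_shift /Hm [X in A + X]addrC addrA.
have ea : a + \sum_i (mu i + (if i == i0 then k else 0)) *: b i =
    hq + \sum_i mu i *: b i.
  by rewrite sum_shift /hq [X in a + X]addrC addrA.
split.
- rewrite eA ea; have := gradsum Hm hq B b mu xbar; rewrite {1}/grad => ->.
  exact: hg.
- move=> i; rewrite mulrDl hc0 add0r; case: eqP => [->|_]; first exact: kg.
  by rewrite mul0r.
- rewrite eA; apply/psdE => w; rewrite quadsum; apply: addr_ge0.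
    exact: (psdE _).1 hHp w.
  by apply: sumr_ge0 => i _; apply: mulr_ge0 => //; apply: hBq.
Qed.
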